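(* For all positive integers $\alpha_1,\alpha_2,\alpha_3$ and all $n\ge 0$, $$|P_n^2|\le [x^{n(\alpha_1+\alpha_2+\alpha_3)}]\left(\frac{1}{1-x^{\alpha_1}-x^{\alpha_2}-x^{\alpha_3}+x^{\alpha_1+\alpha_3}+2x^{\alpha_1+2\alpha_2+\alpha_3}}\right).$$
   Context: A system of $2$ stacks in series consists of an input queue, stack 1, stack 2, and an output queue. Moves: $m_1$ moves the front of the input queue onto stack 1; $m_2$ pops stack 1 and pushes onto stack 2; $m_3$ pops stack 2 and enqueues at the back of the output queue; a move is illegal if its source is empty. $P_n^2\subseteq S_n$ is the set of $\pi$ such that some legal sequence of moves, starting with $1,\dots,n$ (front to back) in the input queue and everything else empty, ends with $\pi(1),\dots,\pi(n)$ (front to back) in the output queue and everything else empty. $[x^N]F$ denotes the coefficient of $x^N$ in the power series $F$. *)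

(* Defs.v *)
From HB Require Import structures.
From mathcomp Require Import all_boot all_order all_algebra all_fingroup.
From Stdlib Require Import ClassicalEpsilon.
Set Implicit Arguments. Unset Strict Implicit. Unset Printing Implicit Defensive.
Import Order.TTheory GRing.Theory Num.Theory.

(* Two stacks in series.  A state is (input queue, stack 1, stack 2, output
   queue).  Queues are listed front to back; stacks are listed top first. *)
Record tstate := TState { inq : seq nat; st1 : seq nat; st2 : seq nat; outq : seq nat }.

Inductive move := m1 | m2 | m3.

Definition step (m : move) (s : tstate) : option tstate :=
  match m, s with
  | m1, TState (x :: i) a b o => Some (TState i (x :: a) b o)
  | m2, TState i (x :: a) b o => Some (TState i a (x :: b) o)
  | m3, TState i a (x :: b) o => Some (TState i a b (rcons o x))
  | _, _ => None
  end.

Fixpoint run (w : seq move) (s : tstate) : option tstate :=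
  match w with
  | [::] => Some s
  | m :: w' => match step m s with Some s' => run w' s' | None => None end
  end.

(* pi (a permutation of {1..n}, encoded as a permutation of 'I_n shifted by 1)
   is sortable: some legal move sequence takes input 1..n to output
   pi(1),...,pi(n) with everything else empty. *)
Definition in_P2 (n : nat) (pi : 'S_n) : Prop :=
  exists w : seq move,
    run w (TState (iota 1 n) [::] [::] [::])
    = Some (TState [::] [::] [::] [seq (pi i).+1 | i <- enum 'I_n]).

Definition in_P2b (n : nat) (pi : 'S_n) : bool :=
  if excluded_middle_informative (in_P2 pi) then true else false.

Definition P2 (n : nat) : {set 'S_n} := [set pi | in_P2b pi].

Definition denom (a1 a2 a3 : nat) : {poly int} :=
  (1 - 'X^a1 - 'X^a2 - 'X^a3 + 'X^(a1 + a3) + 2%:R *: 'X^(a1 + 2 * a2 + a3))%R.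

Definition is_inverse_series (D : {poly int}) (c : nat -> int) : Prop :=
  forall N : nat, (\sum_(k < N.+1) D`_k * c (N - k)%N)%R = ((N == 0%N)%:R)%R.

(* Main.v *)
Require Import Defs.
From HB Require Import structures.
From mathcomp Require Import all_boot all_order all_algebra all_fingroup.
From mathcomp Require Import ring zify.
From Stdlib Require Import ClassicalEpsilon.
Set Implicit Arguments. Unset Strict Implicit. Unset Printing Implicit Defensive.
Import Order.TTheory GRing.Theory Num.Theory.

Definition move_eqb (x y : move) : bool :=
  match x, y with m1, m1 | m2, m2 | m3, m3 => true | _, _ => false end.
Lemma move_eqP : Equality.axiom move_eqb.
Proof. by case; case; constructor. Qed.
HB.instance Definition _ := hasDecEq.Build move move_eqP.

Lemma run_cat p q s : run (p ++ q) s =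
  match run p s with Some s' => run q s' | None => None end.
Proof. elim: p s => [//|m p IH] s /=. by case: (step m s). Qed.

Definition forb (u : seq move) : bool :=
  [|| u == [:: m1; m3], u == [:: m1; m2; m3; m2] | u == [:: m1; m2; m2; m3]].
Definition rew (u : seq move) : seq move :=
  if u == [:: m1; m3] then [:: m3; m1]
  else if u == [:: m1; m2; m3; m2] then [:: m2; m1; m2; m3]
  else [:: m2; m1; m3; m2].

Definition rk (m : move) : nat := match m with m1 => 2 | m2 => 1 | m3 => 0 end.
Definition num (w : seq move) : nat := foldl (fun a m => a * 3 + rk m) 0 w.

Lemma foldl_num a w : foldl (fun a m => a * 3 + rk m) a w = a * 3 ^ size w + num w.
Proof.
elim: w a => [|m w IH] a /=; first by rewrite /num /= muln1 addn0.
rewrite /num /= IH (IH (0 * 3 + rk m)) expnS. nia.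
Qed.

Lemma num_cat p q : num (p ++ q) = num p * 3 ^ size q + num q.
Proof. by rewrite /num foldl_cat foldl_num. Qed.

Lemma num_lt p u v q : size u = size v -> num v < num u ->
  num (p ++ v ++ q) < num (p ++ u ++ q).
Proof.
move=> hs hl; rewrite !num_cat !size_cat hs ltn_add2l ltn_add2r ltn_pmul2r //.
by rewrite expn_gt0.
Qed.

Lemma rew_spec u : forb u ->
  (forall s, run (rew u) s = run u s) /\ size (rew u) = size u /\ num (rew u) < num u.
Proof.
case/or3P => /eqP -> ; rewrite /rew /=; (split; [|by []]) => -[i a b o].
- by case: i => [|x i]; case: b => [|z b].
- by case: i => [|x i]; case: a => [|y [|y' a]]; case: b => [|z b].
- by case: i => [|x i]; case: a => [|y [|y' a]]; case: b => [|z b].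
Qed.

Inductive ast := S0 | SA | SB | SC | SD.
Definition trans (s : ast) (m : move) : option ast :=
  match s, m with
  | S0, m1 => Some SA | S0, _ => Some S0
  | SA, m1 => Some SA | SA, m2 => Some SB | SA, m3 => None
  | SB, m1 => Some SA | SB, m2 => Some SC | SB, m3 => Some SD
  | SC, m1 => Some SA | SC, m2 => Some S0 | SC, m3 => None
  | SD, m1 => Some SA | SD, m2 => None | SD, m3 => Some S0
  end.
Fixpoint acc (s : ast) (w : seq move) : bool :=
  match w with
  | [::] => true
  | m :: w' => match trans s m with Some s' => acc s' w' | None => false end
  end.
Definition hist (s : ast) : seq move :=
  match s with S0 => [::] | SA => [:: m1] | SB => [:: m1; m2]
  | SC => [:: m1; m2; m2] | SD => [:: m1; m2; m3] end.

Lemma trans_hist s m s' : trans s m = Some s' -> exists r, rcons (hist s) m = r ++ hist s'.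
Proof.
move=> h; exists (take (size (rcons (hist s) m) - size (hist s')) (rcons (hist s) m)).
by move: h; case: s; case: m => //= -[<-].
Qed.

Lemma trans_none s m : trans s m = None -> forb (rcons (hist s) m).
Proof. by case: s; case: m. Qed.

Lemma bad_factor w s : acc s w = false ->
  exists p u q, hist s ++ w = p ++ u ++ q /\ forb u.
Proof.
elim: w s => [|m w IH] s //=.
case E: (trans s m) => [s'|] h.
- have [p [u [q [e f]]]] := IH s' h.
  have [r er] := trans_hist E.
  exists (r ++ p), u, q; split => //.
  by rewrite -cat_rcons er -catA e catA.
- exists [::], (rcons (hist s) m), w; split; first by rewrite cat_rcons.
  exact: trans_none.
Qed.

Lemma exists_good k : forall w st t, num w < k -> run w st = Some t ->
  exists w', acc S0 w' /\ run w' st = Some t.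
Proof.
elim: k => [//|k IH] w st t hk hr.
case E: (acc S0 w); first by exists w.
have [p [u [q [e f]]]] := bad_factor E.
rewrite /= in e; subst w.
have [hrun [hsz hnum]] := rew_spec f.
apply: (IH (p ++ rew u ++ q)).
- have := num_lt p q (esym hsz) hnum; lia.
- by move: hr; rewrite !run_cat; case: (run p st) => // s'; rewrite !run_cat hrun.
Qed.

Lemma run_counts w st t : run w st = Some t ->
  [/\ size (inq st) = size (inq t) + count_mem m1 w,
      size (st1 t) + count_mem m2 w = size (st1 st) + count_mem m1 w &
      size (st2 t) + count_mem m3 w = size (st2 st) + count_mem m2 w].
Proof.
elim: w st => [|m w IH] [i a b o] /=; first by case=> <- /=; rewrite !addn0.
case: m => /=.
- case: i => [|x i] //= /IH /= [H1 H2 H3]; split; lia.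
- case: a => [|x a] //= /IH /= [H1 H2 H3]; split; lia.
- case: b => [|x b] //= /IH /= [H1 H2 H3]; split; lia.
Qed.

Definition aw (a1 a2 a3 : nat) (m : move) : nat :=
  match m with m1 => a1 | m2 => a2 | m3 => a3 end.

Lemma wt_count a1 a2 a3 w : sumn (map (aw a1 a2 a3) w) =
  a1 * count_mem m1 w + a2 * count_mem m2 w + a3 * count_mem m3 w.
Proof. elim: w => [|m w IH] /=; first by rewrite !muln0. rewrite IH; case: m => /=; lia. Qed.

Fixpoint H (f : move -> nat) (k : nat) (s : ast) (N : nat) : nat :=
  match k with
  | 0 => nat_of_bool (N == 0)
  | k'.+1 =>
    let T m := match trans s m with
               | Some s' => if f m <= N then H f k' s' (N - f m) else 0
               | None => 0 end in
    (N == 0) + (T m1 + T m2 + T m3)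
  end.

Definition hd_is (m : move) (w : seq move) : bool :=
  if w is x :: _ then x == m else false.

Lemma size_split (l : seq (seq move)) : size l =
  count_mem [::] l + (count (hd_is m1) l + count (hd_is m2) l + count (hd_is m3) l).
Proof. elim: l => [|w l IH] //=; rewrite IH; case: w => [|[] w] /=; lia. Qed.

Lemma count0 (P : pred (seq move)) (l : seq (seq move)) :
  (forall w, w \in l -> P w -> False) -> count P l = 0.
Proof.
move=> h; apply/eqP; rewrite -leqn0 leqNgt -has_count.
by apply/hasP => -[w wl pw]; exact: h wl pw.
Qed.

Lemma count_le f (hf : forall m, 0 < f m) k : forall N s (l : seq (seq move)),
  N <= k -> uniq l -> (forall w, w \in l -> acc s w /\ sumn (map f w) = N) ->
  size l <= H f k s N.
Proof.
have nil_le : forall N s (l : seq (seq move)), uniq l ->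
    (forall w, w \in l -> acc s w /\ sumn (map f w) = N) ->
    count_mem [::] l <= (N == 0).
  move=> N s l ul hl; rewrite count_uniq_mem //.
  case: N hl => [|N] hl; first by case: (_ \in _).
  by case hin: ([::] \in l) => //; have [_ /= e] := hl _ hin.
have big_le : forall N s (l : seq (seq move)) t, N < f t ->
    (forall w, w \in l -> acc s w /\ sumn (map f w) = N) ->
    count (hd_is t) l = 0.
  move=> N s l t ht hl; apply: count0 => -[|x w] // /hl [_ /= e] /eqP ex.
  subst x; lia.
elim: k => [|k IH] N s l hN ul hl.
  have N0 : N = 0 by lia.
  subst N; rewrite size_split /=.
  rewrite !(big_le 0 s l) ?hf //.
  by have := nil_le 0 s l ul hl; rewrite /= !addn0.
rewrite size_split /=; apply: leq_add; first exact: (nil_le N s l).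
have tle : forall t, count (hd_is t) l <=
  match trans s t with
  | Some s' => if f t <= N then H f k s' (N - f t) else 0
  | None => 0 end.
  move=> t; case E: (trans s t) => [s'|]; last first.
    rewrite (@count0 _ l) // => -[|x w] // /hl [/= + _] /eqP ex.
    by subst x; rewrite E.
  case: (leqP (f t) N) => ht; last by rewrite (big_le N s l t ht hl).
  rewrite -size_filter -(size_map behead).
  apply: IH.
  - have := hf t; lia.
  - rewrite map_inj_in_uniq ?filter_uniq //.
    move=> [|x w] [|y v]; rewrite !mem_filter //= => /andP [/eqP -> _] /andP [/eqP -> _].
    by move=> ->.
  - move=> w /mapP [[|x v]]; rewrite mem_filter //= => /andP [/eqP ex /hl [ha hs]] ->.
    subst x; rewrite /= E in ha; split => //; move: hs => /=; lia.
by rewrite -!addnA; apply: leq_add; [|apply: leq_add]; rewrite ?tle.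
Qed.

Lemma H_zero f (hf : forall m, 0 < f m) k s : H f k s 0 = 1.
Proof.
case: k => //= k.
have z : forall m, (f m <= 0) = false by move=> m; rewrite leqNgt hf.
by rewrite !z; case: (trans s m1); case: (trans s m2); case: (trans s m3).
Qed.

Lemma H_fuel f (hf : forall m, 0 < f m) k1 : forall k2 s N, N <= k1 -> N <= k2 ->
  H f k1 s N = H f k2 s N.
Proof.
elim: k1 => [|k1 IH] k2 s N h1 h2.
  have -> : N = 0 by lia. by rewrite !H_zero.
case: k2 h2 => [|k2] h2.
  have -> : N = 0 by lia. by rewrite !H_zero.
rewrite /=; congr (_ + (_ + _ + _)).
all: case: (trans _ _) => // s'; case: ifP => // hle; apply: IH;
  move: (hf m1) (hf m2) (hf m3); lia.
Qed.

Local Open Scope ring_scope.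

Definition sh (g : nat -> int) (a N : nat) : int := if (a <= N)%N then g (N - a)%N else 0.
Definition dl (N : nat) : int := (N == 0%N)%:R.

Definition hz f (s : ast) (N : nat) : int := (H f N s N)%:Z.

Lemma hz_unfold f (hf : forall m, (0 < f m)%N) s N : hz f s N = dl N +
  ((match trans s m1 with Some s' => sh (hz f s') (f m1) N | None => 0 end) +
   (match trans s m2 with Some s' => sh (hz f s') (f m2) N | None => 0 end) +
   (match trans s m3 with Some s' => sh (hz f s') (f m3) N | None => 0 end)).
Proof.
rewrite /hz /dl /sh.
case: N => [|N].
  have z : forall m, (f m <= 0)%N = false by move=> m; rewrite leqNgt hf.
  rewrite H_zero // !z /=.
  by case: (trans s m1); case: (trans s m2); case: (trans s m3); rewrite /= ?addr0.
rewrite /= !PoszD; congr (_ + (_ + _ + _)).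
all: case: (trans _ _) => // s'; case: ifP => // hle; congr Posz; apply: H_fuel => //;
  move: (hf m1) (hf m2) (hf m3); lia.
Qed.

Lemma sh_ext g1 g2 a N : (forall M, g1 M = g2 M) -> sh g1 a N = sh g2 a N.
Proof. by move=> e; rewrite /sh e. Qed.
Lemma shB g1 g2 a N : sh (fun M => g1 M - g2 M) a N = sh g1 a N - sh g2 a N.
Proof. by rewrite /sh; case: ifP; rewrite ?subr0. Qed.
Lemma shM c g a N : sh (fun M => c * g M) a N = c * sh g a N.
Proof. by rewrite /sh; case: ifP; rewrite ?mulr0. Qed.
Lemma sh_sh g a b N : sh (sh g a) b N = sh g (a + b) N.
Proof.
rewrite /sh; case: (leqP b N) => hb; case: (leqP (a + b) N) => hab.
- have -> : (a <= N - b)%N by lia.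
  by have -> : (N - b - a = N - (a + b))%N by lia.
- by have -> : (a <= N - b)%N = false by lia.
- lia.
- by [].
Qed.
Lemma sh0 g N : sh g 0 N = g N.
Proof. by rewrite /sh subn0. Qed.

Lemma chain a1 a2 a3 (h1 : (0 < a1)%N) (h2 : (0 < a2)%N) (h3 : (0 < a3)%N) N :
  let h := hz (aw a1 a2 a3) in
  h S0 N - sh (h S0) a1 N - sh (h S0) a2 N - sh (h S0) a3 N
  + sh (h S0) (a1 + a3) N + 2%:R * sh (h S0) (a1 + 2 * a2 + a3) N = dl N.
Proof.
move=> h.
have hf : forall m, (0 < aw a1 a2 a3 m)%N by case.
have E0 M : h S0 M = dl M + sh (h SA) a1 M + sh (h S0) a2 M + sh (h S0) a3 M.
  by rewrite /h hz_unfold //= !addrA.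
have EA M : h SA M = dl M + sh (h SA) a1 M + sh (h SB) a2 M.
  by rewrite /h hz_unfold //= !addrA addr0.
have EB M : h SB M = dl M + sh (h SA) a1 M + sh (h SC) a2 M + sh (h SD) a3 M.
  by rewrite /h hz_unfold //= !addrA.
have EC M : h SC M = dl M + sh (h SA) a1 M + sh (h S0) a2 M.
  by rewrite /h hz_unfold //= !addrA addr0.
have ED M : h SD M = dl M + sh (h SA) a1 M + sh (h S0) a3 M.
  by rewrite /h hz_unfold //= !addrA addr0.
have LC M : h SC M = h S0 M - sh (h S0) a3 M.
  by rewrite EC E0; ring.
have LD M : h SD M = h S0 M - sh (h S0) a2 M.
  by rewrite ED E0; ring.
have LB M : h SB M = h S0 M - 2%:R * sh (h S0) (a2 + a3) M.
  rewrite EB (sh_ext _ _ LC) (sh_ext _ _ LD) !shB !sh_sh (addnC a3 a2) E0; ring.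
have LA M : h SA M = h S0 M - sh (h S0) a3 M - 2%:R * sh (h S0) (a2 + a3 + a2) M.
  rewrite EA (sh_ext _ _ LB) shB shM sh_sh {1}E0; ring.
rewrite {1}E0 (sh_ext _ _ LA) !shB shM !sh_sh.
have -> : (a2 + a3 + a2 + a1 = a1 + 2 * a2 + a3)%N by lia.
rewrite (addnC a3 a1); ring.
Qed.

Definition Sp (p : {poly int}) (g : nat -> int) (N : nat) : int :=
  \sum_(k < N.+1) p`_k * g (N - k)%N.

Lemma Sp_add p q g N : Sp (p + q) g N = Sp p g N + Sp q g N.
Proof. by rewrite /Sp -big_split; apply: eq_bigr => k _; rewrite coefD mulrDl. Qed.
Lemma Sp_sub p q g N : Sp (p - q) g N = Sp p g N - Sp q g N.
Proof. by rewrite /Sp -sumrB; apply: eq_bigr => k _; rewrite coefB mulrBl. Qed.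
Lemma Sp_opp p g N : Sp (- p) g N = - Sp p g N.
Proof. by rewrite /Sp -sumrN; apply: eq_bigr => k _; rewrite coefN mulNr. Qed.
Lemma Sp_scale c p g N : Sp (c *: p) g N = c * Sp p g N.
Proof. by rewrite /Sp mulr_sumr; apply: eq_bigr => k _; rewrite coefZ mulrA. Qed.
Lemma Sp_Xn a g N : Sp 'X^a g N = sh g a N.
Proof.
rewrite /Sp /sh; under eq_bigr do rewrite coefXn.
case: (leqP a N) => ha.
- have ha' : (a < N.+1)%N by lia.
  rewrite (bigD1 (Ordinal ha')) //= eqxx mul1r big1 ?addr0 // => i ne.
  have -> : (nat_of_ord i == a) = false.
    apply/negbTE; apply: contra ne => /eqP e; apply/eqP/val_inj => /=. exact: e.
  by rewrite mul0r.
- apply: big1 => i _.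
  have -> : (nat_of_ord i == a) = false by have := ltn_ord i; lia.
  by rewrite mul0r.
Qed.
Lemma Sp_1 g N : Sp 1 g N = g N.
Proof. by rewrite -(expr0 'X) Sp_Xn sh0. Qed.

Lemma Sp_denom a1 a2 a3 g N : Sp (denom a1 a2 a3) g N =
  g N - sh g a1 N - sh g a2 N - sh g a3 N + sh g (a1 + a3) N
  + 2%:R * sh g (a1 + 2 * a2 + a3) N.
Proof. by rewrite /denom !(Sp_add, Sp_opp, Sp_scale, Sp_Xn, Sp_1). Qed.

Lemma denom0 a1 a2 a3 (h1 : (0 < a1)%N) (h2 : (0 < a2)%N) (h3 : (0 < a3)%N) :
  (denom a1 a2 a3)`_0 = 1.
Proof.
have z : forall a, (0 < a)%N -> (0%N == a) = false by case.
rewrite /denom !(coefD, coefN, coefZ, coefXn, coef1) (z a1) // (z a2) // (z a3) //.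
rewrite (z (a1 + a3)%N) ?(z (a1 + 2 * a2 + a3)%N); try lia.
Qed.

Lemma Sp_uniq (D : {poly int}) g1 g2 : D`_0 = 1 ->
  (forall N, Sp D g1 N = Sp D g2 N) -> forall N, g1 N = g2 N.
Proof.
move=> D0 e N; elim/ltn_ind: N => N IH.
have := e N; rewrite /Sp !big_ord_recl D0 !mul1r subn0.
rewrite (eq_bigr (fun i : 'I_N => D`_(bump 0 i) * g2 (N - bump 0 i)%N)).
  by move/addIr.
move=> i _; rewrite IH //; have := ltn_ord i; rewrite lift0; lia.
Qed.

Lemma out_inj n (p1 p2 : 'S_n) :
  [seq (p1 i).+1 | i <- enum 'I_n] = [seq (p2 i).+1 | i <- enum 'I_n] -> p1 = p2.
Proof.
move=> e; apply/permP => i.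
have h : forall p : 'S_n, nth 0%N [seq (p i).+1 | i <- enum 'I_n] i = (p i).+1.
  by move=> p; rewrite (nth_map i) ?size_enum_ord // nth_ord_enum.
have := h p1; rewrite e h => -[] h'.
exact: val_inj.
Qed.

Definition s0 n := TState (iota 1 n) [::] [::] [::].
Definition fin n (p : 'S_n) := TState [::] [::] [::] [seq (p i).+1 | i <- enum 'I_n].
Definition gw n (p : 'S_n) : seq move :=
  epsilon (inhabits [::]) (fun w => acc S0 w /\ run w (s0 n) = Some (fin p)).

Lemma gw_spec n (p : 'S_n) : p \in P2 n ->
  acc S0 (gw p) /\ run (gw p) (s0 n) = Some (fin p).
Proof.
rewrite /P2 inE /in_P2b; case: excluded_middle_informative => // -[w hw] _.
rewrite /gw; apply: (epsilon_spec (inhabits [::]) (fun w => acc S0 w /\ run w (s0 n) = Some (fin p))); exact: (@exists_good (num w).+1 w).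
Qed.

Theorem proposition5 (a1 a2 a3 : nat) (h1 : (0 < a1)%N) (h2 : (0 < a2)%N)
  (h3 : (0 < a3)%N) (n : nat) (c : nat -> int)
  (hc : is_inverse_series (denom a1 a2 a3) c) :
  (((#|P2 n|)%:Z) <= c (n * (a1 + a2 + a3))%N)%R.
Proof.
set f := aw a1 a2 a3.
have hf : forall m, (0 < f m)%N by case.
have cE : forall N, c N = hz f S0 N.
  apply: (Sp_uniq (denom0 h1 h2 h3)) => N.
  rewrite /Sp hc -/(Sp _ _ _) Sp_denom; symmetry; exact: (chain h1 h2 h3 N).
set M := (n * (a1 + a2 + a3))%N.
have le : (#|P2 n| <= H f M S0 M)%N.
  rewrite cardE -(size_map (@gw n)).
  apply: count_le => //.
  - rewrite map_inj_in_uniq ?enum_uniq // => p1 p2.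
    rewrite !mem_enum => /gw_spec [_ e1] /gw_spec [_ e2] eg.
    by move: e1; rewrite eg e2 => -[] /out_inj.
  - move=> w /mapP [p]; rewrite mem_enum => /gw_spec [ha hr] ->; split => //.
    have [c1 c2 c3] := run_counts hr.
    move: c1 c2 c3; rewrite /= ?size_iota => c1 c2 c3.
    rewrite /f wt_count /M; move: c1 c2 c3; rewrite !add0n => c1 -> ->; rewrite -c1; nia.
by rewrite cE /hz lez_nat.
Qed.
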